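(* For each integer $m\ge 2$ let $N_m=p_1p_2\cdots p_m$ be the product of the first $m$ primes (so $N_m\ge 6$), and let $H_m=\{0,N_m,2N_m,\dots,(m-1)N_m\}$. Then $\mathfrak{S}(H_m)\to\infty$ as $m\to\infty$.
   Context: For a finite set $H$ of $m$ integers, $\nu_p(H)$ denotes the number of distinct residues modulo $p$ among the elements of $H$. The Selberg (singular series) constant is $$\mathfrak{S}(H)=\prod_{p}\Big(1-\frac{\nu_p(H)}{p}\Big)\Big(1-\frac1p\Big)^{-m},$$ where the product runs over all primes $p$. *)

(* Defs.v *)
From HB Require Import structures.
From mathcomp Require Import all_boot all_order all_algebra.
From mathcomp Require Import all_classical all_reals all_analysis.
Set Implicit Arguments. Unset Strict Implicit. Unset Printing Implicit Defensive.
Import Order.TTheory GRing.Theory Num.Theory numFieldNormedType.Exports.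

Definition nu (p : nat) (H : seq int) : nat :=
  size (undup [seq (x %% Posz p)%Z | x <- H]).

Local Open Scope ring_scope.
Local Open Scope classical_set_scope.

Definition singular_partial (R : realType) (H : seq int) (x : nat) : R :=
  \prod_(p < x.+1 | prime p)
     ((1 - (nu p H)%:R / (p%:R : R)) * (1 - (p%:R : R)^-1) ^- (size (undup H))).

Definition singular_series (R : realType) (H : seq int) : R :=
  lim (singular_partial R H @ \oo).

Local Close Scope ring_scope.

Lemma next_prime_ex (n : nat) : exists p, (n < p) && prime p.
Proof. by case: (prime_above n) => p Hp Pp; exists p; rewrite Hp Pp. Qed.

Definition next_prime (n : nat) : nat := ex_minn (next_prime_ex n).

(* nth_prime 0 = 2, nth_prime 1 = 3, ... : nth_prime i is p_{i+1} *)
Fixpoint nth_prime (k : nat) : nat :=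
  match k with 0 => 2 | k'.+1 => next_prime (nth_prime k') end.

Definition primorial (m : nat) : nat := \prod_(i < m) nth_prime i.

Definition Hset (m : nat) : seq int :=
  [seq Posz (k * primorial m)%N | k <- iota 0 m].

(* Main.v *)
Require Import Defs.
From HB Require Import structures.
From mathcomp Require Import all_boot all_order all_algebra.
From mathcomp Require Import all_classical all_reals all_analysis.
From mathcomp Require Import zify ring lra.
Import Order.TTheory GRing.Theory Num.Theory numFieldNormedType.Exports.
Local Open Scope classical_set_scope.
Local Close Scope ring_scope.
Local Open Scope classical_set_scope.

Lemma next_primeP n : [/\ n < next_prime n, prime (next_prime n) &
   forall q, n < q -> prime q -> next_prime n <= q]%N.
Proof.
rewrite /next_prime; case: ex_minnP => p /andP[h1 h2] h3; split => // q h4 h5.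
by apply: h3; rewrite h4 h5.
Qed.

Lemma nth_prime_prime k : prime (nth_prime k).
Proof. by case: k => [|k] //=; case: (next_primeP (nth_prime k)). Qed.

Lemma nth_prime_lt k : (nth_prime k < nth_prime k.+1)%N.
Proof. by rewrite /=; case: (next_primeP (nth_prime k)). Qed.

Lemma nth_prime_mono i j : (i <= j)%N -> (nth_prime i <= nth_prime j)%N.
Proof.
elim: j => [|j IH]; first by rewrite leqn0 => /eqP ->.
rewrite leq_eqVlt => /orP[/eqP -> //|/IH h].
by apply: leq_trans h (ltnW (nth_prime_lt _)).
Qed.

Lemma nth_prime_enum k p : prime p -> (p <= nth_prime k)%N ->
  exists2 i, (i <= k)%N & p = nth_prime i.
Proof.
move=> pp; elim: k => [|k IH].
  move=> hp; exists 0%N => //=; apply/eqP; rewrite eqn_leq hp /=.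
  by apply: prime_gt1.
move=> hp; case: (leqP p (nth_prime k)) => h.
  by case: (IH h) => i hi ->; exists i => //; apply: leqW.
exists k.+1 => //; apply/eqP; rewrite eqn_leq hp /=.
by case: (next_primeP (nth_prime k)) => _ _ ->.
Qed.

Lemma nth_prime_ge k : (2 * k.+1 + 1 <= nth_prime k.+1)%N.
Proof.
elim: k => [|k IH].
  rewrite /=. case: (next_primeP 2) => h1 h2 h3.
  by apply: (leq_trans _ h1).
have h := nth_prime_lt k.+1.
have hp := nth_prime_prime k.+2.
have h2 : (2 * k.+2 <= nth_prime k.+2)%N by move: IH h; lia.
rewrite leq_eqVlt in h2; case/orP: h2 => [/eqP e|h2].
  move: hp; rewrite -e => /primeP [_ /(_ 2%N)].
  by rewrite dvdn_mulr // => /(_ isT) /orP[] /eqP; lia.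
by move: h2; lia.
Qed.
Local Close Scope ring_scope.

Lemma primorial_gt0 m : (0 < primorial m)%N.
Proof. rewrite /primorial; apply: prodn_gt0 => i; exact: prime_gt0 (nth_prime_prime _). Qed.

Lemma dvd_primorial m i : (i < m)%N -> (nth_prime i %| primorial m)%N.
Proof.
move=> im; rewrite /primorial (bigD1 (Ordinal im)) //=; exact: dvdn_mulr.
Qed.

Lemma primorial_dvd m p : prime p -> (p %| primorial m)%N ->
  exists2 i, (i < m)%N & p = nth_prime i.
Proof.
move=> pp; rewrite /primorial Euclid_dvd_prod // big_has => /hasP [i _].
rewrite /= dvdn_prime2 //; last exact: nth_prime_prime.
by move/eqP => ->; exists i.
Qed.

Lemma small_dvd m p : (0 < m)%N -> prime p -> (p <= nth_prime m.-1)%N ->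
  (p %| primorial m)%N.
Proof.
move=> m0 pp /(@nth_prime_enum _ _ pp) [i hi ->]; apply: dvd_primorial.
by move: hi m0; lia.
Qed.

Lemma large_ndvd m p : prime p -> (nth_prime m.-1 < p)%N ->
  ~~ (p %| primorial m)%N.
Proof.
move=> pp hp; apply/negP => /(@primorial_dvd _ _ pp) [i hi e].
have h : (i <= m.-1)%N by lia.
have := @nth_prime_mono _ _ h; rewrite -e; lia.
Qed.

Lemma size_undup_H m : size (undup (Hset m)) = m.
Proof.
rewrite undup_id ?size_map ?size_iota // map_inj_uniq ?iota_uniq //.
move=> a b [] /eqP; rewrite eqn_pmul2r ?primorial_gt0 //; by move/eqP.
Qed.

Lemma nseq_undup (T : eqType) (x : T) n : size (undup (nseq n.+1 x)) = 1%N.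
Proof.
elim: n => [|n IH] //=. by rewrite in_cons eqxx.
Qed.

Lemma nu_dvd m p : (0 < m)%N -> (p %| primorial m)%N -> nu p (Hset m) = 1%N.
Proof.
case: m => // m _ hd; rewrite /nu /Hset -map_comp.
set s := map _ _.
have : all (pred1 0%Z) s.
  apply/allP => x /mapP [k _ ->] /=.
  by rewrite modz_nat; apply/eqP; congr Posz; apply/eqP; rewrite -/(dvdn _ _) dvdn_mull.
move/all_pred1P => ->; rewrite /s size_map size_iota.
by rewrite nseq_undup.
Qed.

Lemma nu_ndvd m p : prime p -> ~~ (p %| primorial m)%N -> (m <= p)%N -> nu p (Hset m) = m.
Proof.
move=> pp hnd hmp; rewrite /nu /Hset -map_comp.
rewrite undup_id ?size_map ?size_iota //.
rewrite map_inj_in_uniq ?iota_uniq // => a b; rewrite !mem_iota /= !add0n => ha hb.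
rewrite !modz_nat => -[].
wlog ab : a b ha hb / (a <= b)%N.
  move=> W; case: (leqP a b) => h; first exact: W.
  by move=> e; symmetry; apply: W => //; [exact: ltnW].
move=> e; apply/eqP; rewrite eqn_leq ab /=.
have : (b * primorial m == a * primorial m %[mod p])%N by rewrite e.
rewrite eqn_mod_dvd ?leq_mul2r ?ab ?orbT // -mulnBl Euclid_dvdM // (negPf hnd) orbF.
move=> hd; have := dvdn_leq; move: hd.
case: (posnP (b - a)) => [z|pos] hd _; first by move: z; lia.
have := dvdn_leq pos hd; lia.
Qed.
Local Open Scope ring_scope.
Local Open Scope ring_scope.

Definition nump m x := (\prod_(i < m) (x - i))%N.
Definition denp m x := (\prod_(i < m) (x + 1 + i))%N.

Lemma nump_step m x : (0 < m)%N -> (nump m x.+1 * (x.+1 - m) = x.+1 * nump m x)%N.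
Proof.
case: m => // m _; rewrite /nump big_ord_recl big_ord_recr /=.
under eq_bigr => i _ do rewrite /bump /= add1n subSS.
rewrite subSS subn0; ring.
Qed.

Lemma denp_step m x : (0 < m)%N -> (denp m x.+1 * x.+1 = denp m x * (x.+1 + m))%N.
Proof.
case: m => // m _; rewrite /denp [in LHS]big_ord_recr [in RHS]big_ord_recl /=.
have E : forall i : 'I_m, (x.+1 + 1 + i = x + 1 + bump 0 i)%N.
  by move=> i; rewrite /bump /=; lia.
rewrite (eq_bigr _ (fun i _ => E i)).
set P := \prod_(i < m) _.
have -> : (x.+1 + 1 + m = x.+1 + m.+1)%N by lia.
have -> : (x + 1 + 0 = x.+1)%N by lia.
ring.
Qed.

Lemma nump_gt0 m x : (m <= x)%N -> (0 < nump m x)%N.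
Proof. move=> h; rewrite /nump prodn_gt0 // => i; have := ltn_ord i; lia. Qed.

Lemma nump_le_denp m x : (nump m x <= denp m x)%N.
Proof. rewrite /nump /denp; apply: leq_prod => i _; lia. Qed.

Lemma denp_le_nump3 m x : (2 * m <= x + 1)%N -> (denp m x <= 3 ^ m * nump m x)%N.
Proof.
move=> h; have -> : (3 ^ m * nump m x = \prod_(i < m) (3 * (x - i)))%N.
  by rewrite big_split /= prod_nat_const card_ord.
rewrite /denp; apply: leq_prod => i _; have := ltn_ord i; lia.
Qed.

Lemma bernoulli (R : realFieldType) (s : R) n : -1 <= s -> 1 + n%:R * s <= (1 + s) ^+ n.
Proof.
move=> hs; elim: n => [|n IH]; first by rewrite mul0r addr0 expr0.
rewrite exprS mulrSr; have h1 : 0 <= 1 + s by lra.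
have h2 : 0 <= n%:R * s ^+ 2 by rewrite mulr_ge0 ?sqr_ge0.
have := ler_wpM2l h1 IH; move: h2; rewrite expr2; nra.
Qed.

Section Fac.
Variable R : realType.
Variables m p : nat.
Hypothesis mp : (m < p)%N.
Hypothesis p1 : (1 < p)%N.

Let t : R := p%:R^-1.
Let F : R := (1 - m%:R / p%:R) * (1 - p%:R^-1) ^- m.

Let pR : (1 < p%:R :> R). Proof. by rewrite ltr1n. Qed.
Let t0 : 0 < t. Proof. rewrite /t invr_gt0 ltr0n; exact: ltnW p1. Qed.
Let t1 : t < 1. Proof. rewrite /t invf_lt1 // ltr0n; exact: ltnW p1. Qed.
Let mt : m%:R * t < 1.
Proof.
have tp : p%:R * t = 1 by rewrite /t mulfV // pnatr_eq0 -lt0n; exact: ltnW p1.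
have : m%:R < p%:R :> R by rewrite ltr_nat.
move=> h; rewrite -[X in _ < X]tp ltr_pM2r //.
Qed.
Let am : 1 - m%:R * t <= (1 - t) ^+ m.
Proof. have := @bernoulli R (- t) m; rewrite mulrN; apply; have := t1; lra. Qed.
Let am0 : 0 < (1 - t) ^+ m. Proof. apply: exprn_gt0; have := t1; lra. Qed.

Lemma fac_pos : 0 < F.
Proof. rewrite /F -/t; apply: mulr_gt0; first by have := mt; lra. by rewrite invr_gt0. Qed.

Lemma fac_le1 : F <= 1.
Proof. rewrite /F -/t -/(_ / _) ler_pdivrMr ?mul1r //; exact: am. Qed.

Lemma fac_ge : p%:R ^+ 2 - m%:R ^+ 2 <= F * p%:R ^+ 2.
Proof.
have := t0; have := t1; have := mt; have := am; have := am0; have := pR.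
move=> pR' am0' am' mt' t1' t0'.
have tp : t * p%:R = 1 by rewrite /t mulVf // pnatr_eq0 -lt0n; exact: ltnW p1.
have h1 : (1 + m%:R * t) * (1 - t) ^+ m <= 1.
  have b := @bernoulli R t m ltac:(lra).
  apply: le_trans (_ : (1 + t) ^+ m * (1 - t) ^+ m <= 1).
    by apply: ler_wpM2r => //; exact: ltW.
  rewrite -exprMn; apply: exprn_ile1; nra.
have h2 : (1 - m%:R * t) * (1 + m%:R * t) <= F.
  rewrite /F -/t -/(_ / _) ler_pdivlMr // -mulrA.
  have h3 : 0 <= 1 - m%:R * t by lra.
  by rewrite -[X in _ <= X]mulr1; apply: ler_wpM2l.
have e : p%:R ^+ 2 - m%:R ^+ 2 = (1 - m%:R * t) * (1 + m%:R * t) * p%:R ^+ 2.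
  rewrite /t; field; lra.
rewrite e; apply: ler_wpM2r => //; exact: sqr_ge0.
Qed.
End Fac.
Local Open Scope classical_set_scope.
Local Open Scope ring_scope.

Lemma u_step (R : realType) H x : singular_partial R H x.+1 =
  singular_partial R H x * (if prime x.+1 then
     (1 - (nu x.+1 H)%:R / (x.+1%:R : R)) * (1 - (x.+1%:R : R)^-1) ^- (size (undup H))
     else 1).
Proof. by rewrite /singular_partial big_mkcond big_ord_recr /= -big_mkcond. Qed.

Lemma u0 (R : realType) H : singular_partial R H 0 = 1.
Proof. by rewrite /singular_partial big_mkcond big_ord1. Qed.

Section Main.
Variable R : realType.
Variable m : nat.
Hypothesis m2 : (2 <= m)%N.

Let H := Hset m.
Let K := nth_prime m.-1.
Let u := singular_partial R H.
Let c (p : nat) : R := if prime p then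
     (1 - (nu p H)%:R / (p%:R : R)) * (1 - (p%:R : R)^-1) ^- m else 1.

Lemma Kge : (2 * m <= K + 1)%N.
Proof.
rewrite /K; case: m m2 => [|[|m']] // _; have := nth_prime_ge m'; simpl; lia.
Qed.

Lemma ustep x : u x.+1 = u x * c x.+1.
Proof. by rewrite /u u_step /c size_undup_H. Qed.

Lemma c_small p : (p <= K)%N -> 1 <= c p.
Proof.
rewrite /c; case: ifP => // pp hp.
rewrite nu_dvd ?small_dvd //; last by lia.
have p1 := prime_gt1 pp.
have t0 : 0 < 1 - (p%:R : R)^-1.
  rewrite subr_gt0 invf_lt1 ?ltr1n // ltr0n; lia.
have t1 : 1 - (p%:R : R)^-1 <= 1.
  rewrite lerBlDr lerDl invr_ge0; exact: ler0n.
rewrite -/(_ / _) mul1r ler_pdivlMr ?exprn_gt0 // mul1r.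
case: m m2 => // m' _; rewrite exprS; apply: ler_piMr => //; first exact: ltW.
exact: exprn_ile1 (ltW t0) t1.
by lia.
Qed.

Lemma c_large p : (K < p)%N -> [/\ 0 < c p, c p <= 1 &
   (p%:R ^+ 2 - m%:R ^+ 2 <= c p * p%:R ^+ 2)].
Proof.
move=> hp; rewrite /c; case: ifP => pp; last first.
  by split; rewrite ?ltr01 // mul1r lerBlDr lerDl sqr_ge0.
have Kg := Kge.
rewrite nu_ndvd ?large_ndvd //; last by lia.
have mp : (m < p)%N by lia.
have p1 : (1 < p)%N by lia.
split; [exact: fac_pos | exact: fac_le1 | exact: fac_ge].
Qed.

Lemma c_pos p : 0 < c p.
Proof.
case: (leqP p K) => h; first by have := c_small _ h; lra.
by case: (c_large _ h).
Qed.

Lemma u_pos x : 0 < u x.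
Proof.
elim: x => [|x IH]; first by rewrite /u u0.
rewrite ustep; exact: mulr_gt0 IH (c_pos _).
Qed.

Lemma u_noninc x y : (K <= x)%N -> (x <= y)%N -> u y <= u x.
Proof.
move=> hx; elim: y => [|y IH]; first by rewrite leqn0 => /eqP ->.
rewrite leq_eqVlt => /orP [/eqP -> //|]; rewrite ltnS => hxy; have h := IH hxy.
rewrite ustep; apply: le_trans h; rewrite ler_piMr //; first exact: ltW (u_pos _).
by case: (c_large y.+1); [lia|].
Qed.

Lemma u_nondec x y : (x <= y)%N -> (y <= K)%N -> u x <= u y.
Proof.
move=> hxy; elim: y hxy => [|y IH]; first by rewrite leqn0 => /eqP ->.
rewrite leq_eqVlt => /orP [/eqP -> //|]; rewrite ltnS => h hy.
have := IH h ltac:(lia); move=> h2; apply: le_trans h2 _.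
rewrite ustep ler_peMr //; first exact: ltW (u_pos _).
exact: c_small.
Qed.

Let g x : R := (nump m x)%:R / (denp m x)%:R.

Lemma denp_gt0 x : (0 < denp m x)%N.
Proof. by rewrite /denp prodn_gt0 // => i; rewrite addn1 addSn. Qed.

Lemma g_pos x : (m <= x)%N -> 0 < g x.
Proof.
move=> h; rewrite /g divr_gt0 // ltr0n ?denp_gt0 //; exact: nump_gt0.
Qed.

Lemma g_le1 x : g x <= 1.
Proof.
rewrite /g ler_pdivrMr ?ltr0n ?denp_gt0 // mul1r ler_nat; exact: nump_le_denp.
Qed.

Lemma gK : ((3 ^ m)%N%:R : R)^-1 <= g K.
Proof.
have Kg := Kge.
have hn : (0 < nump m K)%N by apply: nump_gt0; lia.
rewrite /g ler_pdivlMr ?ltr0n ?denp_gt0 // ler_pdivrMl ?ltr0n ?expn_gt0 //.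
by rewrite -natrM ler_nat; apply: denp_le_nump3.
Qed.

Lemma g_step x : (m < x.+1)%N ->
  g x.+1 * ((x.+1 - m)%N%:R * (x.+1 + m)%N%:R) = g x * x.+1%:R ^+ 2.
Proof.
move=> h.
have e1 := @nump_step m x ltac:(lia).
have e2 := @denp_step m x ltac:(lia).
have d1 := denp_gt0 x.+1; have d0 := denp_gt0 x.
have E1 : ((nump m x.+1)%:R * (x.+1 - m)%N%:R = x.+1%:R * (nump m x)%:R :> R).
  by rewrite -!natrM e1.
have E2 : ((denp m x.+1)%:R * x.+1%:R = (denp m x)%:R * (x.+1 + m)%N%:R :> R).
  by rewrite -!natrM e2.
have D1 : ((denp m x.+1)%:R : R) != 0 by rewrite pnatr_eq0 -lt0n.
have D0 : ((denp m x)%:R : R) != 0 by rewrite pnatr_eq0 -lt0n.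
have X0 : (x.+1%:R : R) != 0 by rewrite pnatr_eq0.
have XP : ((x.+1 + m)%N%:R : R) != 0 by rewrite pnatr_eq0; lia.
rewrite /g mulrA -[_ / _ * _]mulrA [_^-1 * _]mulrC mulrA E1.
have -> : ((denp m x.+1)%:R : R) = (denp m x)%:R * (x.+1 + m)%N%:R / x.+1%:R.
  by rewrite -E2 mulfK.
field; rewrite D0 /=; have := ler0n R x; have := ler0n R m; move=> a b; rewrite !gt_eqF //; lra.
Qed.

Lemma inv_g x : (K <= x)%N -> u K * g K <= u x * g x.
Proof.
have Kg := Kge.
elim: x => [|x IH]; first by rewrite leqn0 => /eqP ->.
rewrite leq_eqVlt => /orP [/eqP -> //|]; rewrite ltnS => hx.
apply: le_trans (IH hx) _.
have hm : (m < x.+1)%N by lia.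
have gx := g_pos x ltac:(lia).
have ux := u_pos x.
have [c0 _ cg] := c_large x.+1 ltac:(lia).
have gs := g_step x hm.
set Xm : R := (x.+1 - m)%N%:R; set Xp : R := (x.+1 + m)%N%:R.
have Xm0 : 0 < Xm by rewrite /Xm ltr0n; lia.
have Xp0 : 0 < Xp by rewrite /Xp ltr0n; lia.
have eX : x.+1%:R ^+ 2 - m%:R ^+ 2 = Xm * Xp :> R.
  rewrite /Xm /Xp natrB ?natrD; [ring | lia].
have hpos : 0 < Xm * Xp by exact: mulr_gt0.
rewrite ustep -mulrA; apply: ler_wpM2l; first exact: ltW ux.
rewrite -(ler_pM2r hpos) -[c x.+1 * _ * _]mulrA gs -eX [c x.+1 * (_ * _)]mulrCA.
by apply: ler_wpM2l; [exact: ltW|].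
Qed.

Lemma lower x : (K <= x)%N -> u K * g K <= u x.
Proof.
move=> h; apply: le_trans (@inv_g x h) _.
rewrite ler_piMr //; [exact: ltW (u_pos _) | exact: g_le1].
Qed.

Lemma c_prime_small p : prime p -> (p <= K)%N ->
  c p = (((1 - (p%:R : R)^-1) ^+ m.-1)^-1).
Proof.
move=> pp hp; rewrite /c pp nu_dvd ?small_dvd //; try lia.
have p1 := prime_gt1 pp.
have t0 : 1 - (p%:R : R)^-1 != 0.
  rewrite gt_eqF // subr_gt0 invf_lt1 ?ltr1n // ltr0n; lia.
case: m m2 => // m' _ /=; rewrite exprS invfM mulrA -/(_ / _) mul1r mulfV // mul1r.
reflexivity.
Qed.

Lemma head : (3 <= m)%N -> (15 / 4 : R) ^+ m.-1 <= u K.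
Proof.
move=> m3; have Kg := Kge.
apply: le_trans (_ : u 5 <= u K); last by apply: u_nondec; lia.
rewrite !ustep /u u0 mul1r.
have -> : c 1 = 1 by [].
have -> : c 4 = 1 by [].
rewrite !mulr1 !c_prime_small //; try lia.
rewrite mul1r -!invfM -!exprMn.
have -> : (1 - (2%:R : R)^-1) * (1 - (3%:R : R)^-1) * (1 - (5%:R : R)^-1) = (15 / 4)^-1.
  by field.
by rewrite exprVn invrK.
Qed.

Lemma ucvg : cvg (u @ \oo).
Proof.
have hv : {homo (fun n => u (n + K)%N) : a b / (a <= b)%N >-> b <= a}.
  by move=> a b h; apply: u_noninc; lia.
have lb : has_lbound (range (fun n => u (n + K)%N)).
  by exists 0 => y [n _ <-]; exact: ltW (u_pos _).
have := nonincreasing_cvgn hv lb.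
rewrite (cvg_shiftn K u) => h; exact: cvgP h.
Qed.

Lemma S_lower : u K * g K <= lim (u @ \oo).
Proof.
apply: limr_ge; first exact: ucvg.
by apply: filterS (nbhs_infty_ge K) => n hn; exact: lower.
Qed.

Lemma S_lower2 : (3 <= m)%N -> m%:R / 12 <= lim (u @ \oo).
Proof.
move=> m3; apply: le_trans S_lower.
have hK := head m3.
have gk := gK.
apply: le_trans (_ : (15 / 4 : R) ^+ m.-1 * ((3 ^ m)%N%:R)^-1 <= _); last first.
  by apply: ler_pM.
case: m m2 m3 => // k _ k2 /=.
rewrite natrX exprS invfM.
have -> : (15 / 4 : R) ^+ k * ((3%:R : R)^-1 * (3%:R ^+ k)^-1) = ((5/4) ^+ k) / 3.
  have e : (15 / 4 : R) ^+ k = 3%:R ^+ k * (5 / 4) ^+ k.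
    by rewrite -exprMn; congr (_ ^+ _); field.
  have h3 : (3%:R : R) ^+ k != 0 by rewrite expf_neq0 // pnatr_eq0.
  rewrite e; field; rewrite h3 //.
have := @bernoulli R (1/4) k ltac:(lra).
have -> : (1 + 1/4 : R) = 5/4 by field.
have -> : (k.+1%:R : R) = k%:R + 1 by rewrite -natr1.
lra.
Qed.
End Main.

Theorem mainTheorem2 (R : realType) :
  (forall m : nat, (2 <= m)%N -> cvg (singular_partial R (Hset m) @ \oo)) /\
  ((fun m : nat => singular_series R (Hset m.+2)) @ \oo --> +oo).
Proof.
split; first by move=> m m2; exact: ucvg.
apply/cvgryPge => A.
apply: filterS2 (nbhs_infty_ger (12 * A)) (nbhs_infty_ge 1) => n h1 h2.
have := @S_lower2 R n.+2 isT ltac:(lia).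
rewrite /singular_series => h; apply: le_trans h.
have : (n%:R : R) <= n.+2%:R by rewrite ler_nat; lia.
lra.
Qed.
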